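(* Let $G$ be a semi-simple group (i.e. $G$ has no nontrivial normal abelian subgroup) with $|\mathcal{C}(G)|=n$ for some positive integer $n$. Then $G$ is finite and $|G|\le (n-1)!$.
   Context: For a group $G$, $\mathcal{C}(G)=\{C_G(x) : x\in G\}$ denotes the set of centralizers of elements of $G$, where $C_G(x)=\{g\in G: gx=xg\}$. The group $G$ is not assumed finite a priori. *)

(* Defs.v *)
From Stdlib Require Import Arith List.
Import ListNotations.

Definition is_group (G : Type) (mul : G -> G -> G) (e : G) (inv : G -> G) : Prop :=
  (forall x y z, mul x (mul y z) = mul (mul x y) z) /\
  (forall x, mul e x = x) /\ (forall x, mul x e = x) /\
  (forall x, mul (inv x) x = e) /\ (forall x, mul x (inv x) = e).

Definition centralizer {G : Type} (mul : G -> G -> G) (x : G) : G -> Prop :=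
  fun g => mul g x = mul x g.

Definition set_eq {G : Type} (S T : G -> Prop) : Prop := forall g, S g <-> T g.

(* |C(G)| = n : there are representatives c 0, ..., c (n-1) whose centralizers
   are pairwise distinct, and every centralizer equals one of them. *)
Definition num_centralizers {G : Type} (mul : G -> G -> G) (n : nat) : Prop :=
  exists c : nat -> G,
    (forall i j, i < n -> j < n ->
       set_eq (centralizer mul (c i)) (centralizer mul (c j)) -> i = j) /\
    (forall x, exists i, i < n /\ set_eq (centralizer mul x) (centralizer mul (c i))).

Definition is_subgroup {G : Type} (mul : G -> G -> G) (e : G) (inv : G -> G)
  (H : G -> Prop) : Prop :=
  H e /\ (forall x y, H x -> H y -> H (mul x y)) /\ (forall x, H x -> H (inv x)).

Definition is_normal {G : Type} (mul : G -> G -> G) (inv : G -> G)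
  (H : G -> Prop) : Prop :=
  forall g h, H h -> H (mul (mul (inv g) h) g).

Definition is_abelian_set {G : Type} (mul : G -> G -> G) (H : G -> Prop) : Prop :=
  forall x y, H x -> H y -> mul x y = mul y x.

Definition semisimple {G : Type} (mul : G -> G -> G) (e : G) (inv : G -> G) : Prop :=
  forall H : G -> Prop, is_subgroup mul e inv H -> is_normal mul inv H ->
    is_abelian_set mul H -> forall h, H h -> h = e.

Definition finite_of_order_le (G : Type) (m : nat) : Prop :=
  exists l : list G, NoDup l /\ (forall x, In x l) /\ length l <= m.

(* Main.v *)
Require Import Defs.
From Stdlib Require Import Arith List ClassicalEpsilon.
Module Aux.
From mathcomp Require Import all_boot.
Set Implicit Arguments.
Unset Strict Implicit.


Definition conj {G : Type} (mul : G -> G -> G) (inv : G -> G) (g x : G) :=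
  mul (inv g) (mul x g).


Lemma mA G mul e inv (HG : is_group G mul e inv) x y z :
  mul (mul x y) z = mul x (mul y z).
Proof. by case: HG => [H _]; rewrite H. Qed.
Lemma m1l G mul e inv (HG : is_group G mul e inv) x : mul e x = x.
Proof. by case: HG => [_ [H _]]. Qed.
Lemma m1r G mul e inv (HG : is_group G mul e inv) x : mul x e = x.
Proof. by case: HG => [_ [_ [H _]]]. Qed.
Lemma mVl G mul e inv (HG : is_group G mul e inv) x : mul (inv x) x = e.
Proof. by case: HG => [_ [_ [_ [H _]]]]. Qed.
Lemma mVr G mul e inv (HG : is_group G mul e inv) x : mul x (inv x) = e.
Proof. by case: HG => [_ [_ [_ [_ H]]]]. Qed.
Lemma mVKl G mul e inv (HG : is_group G mul e inv) x z : mul (inv x) (mul x z) = z.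
Proof. by rewrite -(mA HG) (mVl HG) (m1l HG). Qed.
Lemma mVKr G mul e inv (HG : is_group G mul e inv) x z : mul x (mul (inv x) z) = z.
Proof. by rewrite -(mA HG) (mVr HG) (m1l HG). Qed.
Lemma inv_uniq G mul e inv (HG : is_group G mul e inv) a b : mul a b = e -> inv a = b.
Proof. by move=> H; rewrite -(mVKl HG a b) H (m1r HG). Qed.
Lemma invK G mul e inv (HG : is_group G mul e inv) x : inv (inv x) = x.
Proof. by apply: (inv_uniq HG); rewrite (mVl HG). Qed.
Lemma inv1 G mul e inv (HG : is_group G mul e inv) : inv e = e.
Proof. by apply: (inv_uniq HG); rewrite (m1l HG). Qed.
Lemma invM G mul e inv (HG : is_group G mul e inv) x y :
  inv (mul x y) = mul (inv y) (inv x).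
Proof. by apply: (inv_uniq HG); rewrite (mA HG) (mVKr HG) (mVr HG). Qed.

Ltac gstep HG := first [ rewrite (mA HG) | rewrite (m1l HG) | rewrite (m1r HG)
  | rewrite (mVl HG) | rewrite (mVr HG) | rewrite (mVKl HG) | rewrite (mVKr HG)
  | rewrite (invK HG) | rewrite (inv1 HG) | rewrite (invM HG) ].
Ltac gs HG := rewrite ?/conj; repeat gstep HG.
Ltac gstepH HG H := first [ rewrite (mA HG) in H | rewrite (m1l HG) in H | rewrite (m1r HG) in H
  | rewrite (mVl HG) in H | rewrite (mVr HG) in H | rewrite (mVKl HG) in H | rewrite (mVKr HG) in H
  | rewrite (invK HG) in H | rewrite (inv1 HG) in H | rewrite (invM HG) in H ].
Ltac gsH HG H := rewrite ?/conj in H; repeat gstepH HG H.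

Definition comm {G : Type} (mul : G -> G -> G) (u v : G) := mul u v = mul v u.

Lemma commM G mul e inv (HG : is_group G mul e inv) u v w :
  comm mul u v -> comm mul u w -> comm mul u (mul v w).
Proof. rewrite /comm => H1 H2; by rewrite -(mA HG) H1 (mA HG) H2 (mA HG). Qed.
Lemma commV G mul e inv (HG : is_group G mul e inv) u v :
  comm mul u v -> comm mul u (inv v).
Proof.
rewrite /comm => H.
have ->: mul u (inv v) = mul (inv v) (mul (mul v u) (inv v)) by gs HG.
by rewrite -H; gs HG.
Qed.
Lemma commS G (mul : G -> G -> G) u v : comm mul u v -> comm mul v u.
Proof. by rewrite /comm. Qed.
Lemma commJ G mul e inv (HG : is_group G mul e inv) u a b :
  comm mul a b -> comm mul (conj mul inv u a) (conj mul inv u b).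
Proof.
rewrite /comm => H.
have ->: mul (conj mul inv u a) (conj mul inv u b) = conj mul inv u (mul a b) by gs HG.
by rewrite H; gs HG.
Qed.

Inductive gen {G : Type} (mul : G -> G -> G) (e : G) (inv : G -> G) (k : G) : G -> Prop :=
| gc : forall g, gen mul e inv k (conj mul inv g k)
| ge : gen mul e inv k e
| gm : forall x y, gen mul e inv k x -> gen mul e inv k y -> gen mul e inv k (mul x y)
| gi : forall x, gen mul e inv k x -> gen mul e inv k (inv x).

Lemma kernel_trivial G mul e inv (HG : is_group G mul e inv)
  (Hss : semisimple mul e inv) k :
  (forall y, mul y (conj mul inv k y) = mul (conj mul inv k y) y) -> k = e.
Proof.
move=> P.
pose cm y := mul (inv k) (mul (inv y) (mul k y)).
have C1 y : comm mul y (cm y).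
  have ->: cm y = mul (inv (conj mul inv k y)) y by rewrite /cm; gs HG.
  apply: (commM HG); last by [].
  by apply: (commV HG); exact: P.
have C2 y : comm mul (mul k y) (cm y).
  have ->: cm y = mul (inv (conj mul inv k (mul k y))) (mul k y) by rewrite /cm; gs HG.
  apply: (commM HG); last by [].
  by apply: (commV HG); exact: P.
have C3 y : comm mul (cm y) k.
  have ->: k = mul (mul k y) (inv y) by gs HG.
  apply: (commM HG); first exact: commS (C2 y).
  by apply: (commV HG); exact: commS (C1 y).
have C4 x : comm mul k (conj mul inv x k).
  have ->: conj mul inv x k = mul k (cm x) by rewrite /cm; gs HG.
  apply: (commM HG); first by [].
  exact: commS (C3 x).
have C5 u v : comm mul (conj mul inv u k) (conj mul inv v k).
  have := commJ HG u (C4 (mul v (inv u))).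
  have ->: conj mul inv u (conj mul inv (mul v (inv u)) k) = conj mul inv v k by gs HG.
  by [].
have A1 u x : gen mul e inv k x -> comm mul (conj mul inv u k) x.
  elim => {x}.
  - by move=> g; exact: C5.
  - by rewrite /comm; gs HG.
  - move=> x y _ H1 _ H2. exact: (commM HG H1 H2).
  - by move=> x _ H; exact: (commV HG H).
have A2 x y : gen mul e inv k x -> gen mul e inv k y -> comm mul x y.
  move=> hx hy; elim: hx => {x}.
  - by move=> g; exact: (A1 g y hy).
  - by rewrite /comm; gs HG.
  - by move=> x z _ H1 _ H2; apply: commS; apply: (commM HG); exact: commS.
  - by move=> x _ H; apply: commS; apply: (commV HG); exact: commS.
apply: (Hss (gen mul e inv k)).
- split; first exact: ge.
  by split; [exact: gm | exact: gi].
- move=> g h hh; elim: hh => {h}.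
  + move=> u.
    have ->: mul (mul (inv g) (conj mul inv u k)) g = conj mul inv (mul u g) k by gs HG.
    exact: gc.
  + by gs HG; exact: ge.
  + move=> x y _ H1 _ H2.
    have ->: mul (mul (inv g) (mul x y)) g =
      mul (mul (mul (inv g) x) g) (mul (mul (inv g) y) g) by gs HG.
    exact: gm.
  + move=> x _ H.
    have ->: mul (mul (inv g) (inv x)) g = inv (mul (mul (inv g) x) g) by gs HG.
    exact: gi.
- by move=> x y; exact: A2.
- move: (gc mul e inv k e).
  by have ->: conj mul inv e k = k by gs HG.
Qed.

Lemma centrJ G mul e inv (HG : is_group G mul e inv) g x z :
  centralizer mul (conj mul inv g x) z <-> centralizer mul x (mul g (mul z (inv g))).
Proof.
rewrite /centralizer; split => H.
- have H' := f_equal (fun t => mul g (mul t (inv g))) H; simpl in H'.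
  gsH HG H'; gs HG; exact H'.
- have H' := f_equal (fun t => mul (inv g) (mul t g)) H; simpl in H'.
  gsH HG H'; gs HG; exact H'.
Qed.

Lemma setJ G mul e inv (HG : is_group G mul e inv) g x y :
  set_eq (centralizer mul x) (centralizer mul y) ->
  set_eq (centralizer mul (conj mul inv g x)) (centralizer mul (conj mul inv g y)).
Proof. by move=> H z; rewrite !(centrJ HG); apply: H. Qed.

Lemma set_sym G (S T : G -> Prop) : set_eq S T -> set_eq T S.
Proof. by move=> H z; split => /H. Qed.
Lemma set_trans G (S T U : G -> Prop) : set_eq S T -> set_eq T U -> set_eq S U.
Proof. by move=> H1 H2 z; split => [/H1/H2|/H2/H1]. Qed.

Lemma In_mem (T : eqType) (x : T) s : In x s <-> x \in s.
Proof.
elim: s => //= y s IH; rewrite inE; split.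
- by case=> [->|/IH ->]; rewrite ?eqxx ?orbT.
- by case/orP => [/eqP ->|/IH]; auto.
Qed.

Lemma In_pmap A B (f : A -> option B) s y :
  In y (pmap f s) -> exists x, In x s /\ f x = Some y.
Proof.
elim: s => //= x s IH; case fx: (f x) => [z|] /=.
- case=> [<-|/IH [x' [H1 H2]]]; [by exists x; auto | by exists x'; auto].
- by move/IH => [x' [H1 H2]]; exists x'; auto.
Qed.

Lemma In_pmap2 A B (f : A -> option B) s x y :
  In x s -> f x = Some y -> In y (pmap f s).
Proof.
elim: s => //= x' s IH; case=> [-> fx|Hx fx]; rewrite ?fx /=; first by left.
by case: (f x') => [z|] /=; [right|]; apply: IH.
Qed.

Lemma NoDup_pmap (T : eqType) B (f : T -> option B) s :
  uniq s -> (forall x1 x2 y, f x1 = Some y -> f x2 = Some y -> x1 = x2) ->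
  NoDup (pmap f s).
Proof.
move=> Hu Hf; elim: s Hu => /= [_|x s IH /andP [Hx Hu]]; first by constructor.
case fx: (f x) => [y|] /=; last exact: IH.
constructor; last exact: IH.
move=> Hin; have [x' [H1 H2]] := In_pmap Hin.
have E := Hf _ _ _ fx H2; subst x'.
by move/In_mem: H1; rewrite (negbTE Hx).
Qed.

Lemma length_size A (s : list A) : length s = size s.
Proof. by elim: s => //= x s ->. Qed.

Lemma fact_eq m : fact m = m`!.
Proof. elim: m => // k IH; rewrite factS -IH /=. rewrite mulnE. reflexivity. Qed.

Lemma main G mul e inv n : is_group G mul e inv -> semisimple mul e inv ->
  (0 < n)%coq_nat -> num_centralizers mul n -> finite_of_order_le G (fact (Nat.sub n 1)).
Proof.
move=> HG Hss; case: n => [/Nat.lt_irrefl //|m] _ [c [Hd Hcov]].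
pose C := centralizer mul.
pose j x := proj1_sig (constructive_indefinite_description _ (Hcov x)).
have Hj x : (j x < m.+1)%coq_nat /\ set_eq (C x) (C (c (j x))).
  exact: (proj2_sig (constructive_indefinite_description _ (Hcov x))).
have ltj x : j x < m.+1 by apply/ltP; case: (Hj x).
pose idx x : 'I_m.+1 := Ordinal (ltj x).
have Hidx x : set_eq (C x) (C (c (idx x))) by case: (Hj x).
have Hd' (i i' : 'I_m.+1) : set_eq (C (c i)) (C (c i')) -> i = i'.
  move=> H; apply: val_inj; apply: Hd => //; apply/ltP; exact: ltn_ord.
pose i0 := idx e.
have Hi0 z : C (c i0) z.
  apply/(Hidx e); rewrite /C /centralizer; gs HG; done.
pose fo g (i : 'I_m.+1) := idx (conj mul inv g (c i)).
have Hfo g (i : 'I_m.+1) : set_eq (C (conj mul inv g (c i))) (C (c (fo g i))) by apply: Hidx.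
have fo0 g : fo g i0 = i0.
  apply: Hd' => z; split => _; first exact: Hi0.
  apply/(Hfo g i0); apply/(centrJ HG); exact: Hi0.
have foinj g i i' : fo g i = fo g i' -> i = i'.
  move=> E; apply: Hd'.
  have H1 : set_eq (C (conj mul inv g (c i))) (C (conj mul inv g (c i'))).
    apply: (set_trans (Hfo g i)); rewrite E; apply: set_sym; exact: Hfo.
  have := setJ HG (inv g) H1.
  have K y : conj mul inv (inv g) (conj mul inv g y) = y by gs HG.
  by rewrite !K.
have fodet g h : (forall i, fo g i = fo h i) -> g = h.
  move=> E.
  have H1 y : set_eq (C (conj mul inv g y)) (C (conj mul inv h y)).
    have Hy := Hidx y.
    apply: (set_trans (setJ HG g Hy)); apply: (set_trans (Hfo g _)).
    rewrite E; apply: (set_trans (set_sym (Hfo h _))).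
    exact: (setJ HG h (set_sym Hy)).
  have Hk := kernel_trivial HG Hss (k := mul (inv h) g).
  have ke : mul (inv h) g = e.
    apply: Hk => y.
    have H2 := H1 (conj mul inv (inv h) y).
    have E1 : conj mul inv h (conj mul inv (inv h) y) = y by gs HG.
    have E2 : conj mul inv g (conj mul inv (inv h) y) = conj mul inv (mul (inv h) g) y by gs HG.
    rewrite E1 E2 in H2.
    have := proj1 (H2 (conj mul inv (mul (inv h) g) y)) erefl.
    by rewrite /C /centralizer => ->.
  have : mul h (mul (inv h) g) = mul h e by rewrite ke.
  by rewrite (mVKr HG) (m1r HG) => ->.
pose F g : {ffun 'I_m -> 'I_m} := [ffun i => odflt i (unlift i0 (fo g (lift i0 i)))].
have HF g i : lift i0 (F g i) = fo g (lift i0 i).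
  rewrite ffunE.
  have neq : i0 != fo g (lift i0 i).
    apply/eqP => E; have E2 : i0 = lift i0 i by apply: (foinj g); rewrite fo0.
    by move: (neq_lift i0 i); rewrite -E2 eqxx.
  by have [u Hu ->] := unlift_some neq; rewrite Hu.
have Finj g : injectiveb (F g).
  apply/injectiveP => i1 i2 E; apply: (@lift_inj _ i0); apply: (foinj g).
  by rewrite -!HF E.
have Fdet g h : F g = F h -> g = h.
  move=> E; apply: fodet => i; case: (unliftP i0 i) => [i' ->|->].
  - by rewrite -!HF E.
  - by rewrite !fo0.
pose S := [set phi : {ffun 'I_m -> 'I_m} | injectiveb phi].
pose pre (phi : {ffun 'I_m -> 'I_m}) : option G :=
  match excluded_middle_informative (exists g, F g = phi) with
  | left H => Some (proj1_sig (constructive_indefinite_description _ H))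
  | right _ => None end.
have pre_spec phi g : pre phi = Some g -> F g = phi.
  rewrite /pre; case: excluded_middle_informative => // H [<-].
  exact: (proj2_sig (constructive_indefinite_description _ H)).
have pre_F g : pre (F g) = Some g.
  rewrite /pre; case: excluded_middle_informative => [H|H].
  - congr Some; apply: Fdet; exact: (proj2_sig (constructive_indefinite_description _ H)).
  - by exfalso; apply: H; exists g.
exists (pmap pre (enum S)); split; [|split].
- apply: NoDup_pmap; first exact: enum_uniq.
  by move=> x1 x2 y /pre_spec <- /pre_spec <-.
- move=> x; apply: (In_pmap2 (x := F x)); last exact: pre_F.
  by apply/In_mem; rewrite mem_enum inE.
- have -> : Nat.sub m.+1 1 = m by rewrite /= Nat.sub_0_r.
  rewrite length_size fact_eq; apply/leP.
  rewrite size_pmap (leq_trans (count_size _ _)) // -cardE.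
  by rewrite card_inj_ffuns card_ord ffactnn.
Qed.
End Aux.

Theorem proposition2p5 (G : Type) (mul : G -> G -> G) (e : G) (inv : G -> G)
  (n : nat) :
  is_group G mul e inv ->
  semisimple mul e inv ->
  0 < n ->
  num_centralizers mul n ->
  finite_of_order_le G (fact (n - 1)).
Proof. exact (@Aux.main G mul e inv n). Qed.
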